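(* Let $G=(N,A)$ be an asymmetric directed graph on $n$ vertices and consider the simple asymmetric fractional hedonic game it induces. Every sequence of IS deviations starting from the singleton partition is finite if and only if $G$ is acyclic. Moreover, if $G$ is acyclic, every such sequence has length $\mathcal O(n^4)$.
   Context: A fractional hedonic game (FHG) on agents $N$ is given by utility functions $v_i:N\to\mathbb R$ with $v_i(i)=0$; agent $i$'s utility for a coalition $C\ni i$ is $\frac{1}{|C|}\sum_{j\in C}v_i(j)$. A simple asymmetric FHG is one with $v_i(j)\in\{0,1\}$ and $v_i(j)=1\Rightarrow v_j(i)=0$; it is induced by the asymmetric digraph with arc $(i,j)$ iff $v_i(j)=1$. The singleton partition is $\{\{i\}:i\in N\}$. An IS deviation of agent $i$ from partition $\pi$ to $\pi'$ is a move of $i$ alone from $\pi(i)$ into another coalition of $\pi$ or into a new singleton such that $i$ strictly prefers $\pi'(i)$ to $\pi(i)$ and every $j\in\pi'(i)\setminus\{i\}$ weakly prefers $\pi'(j)$ to $\pi(j)$. *)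

(* Defs.v *)
From mathcomp Require Import all_boot all_order all_algebra.
Set Implicit Arguments. Unset Strict Implicit. Unset Printing Implicit Defensive.
Import Order.TTheory GRing.Theory Num.Theory.

Section FHG.
Variable T : finType.

Definition asymmetric (arc : rel T) : Prop := forall i j, arc i j -> ~~ arc j i.

Definition acyclic (arc : rel T) : Prop :=
  forall (x : T) (p : seq T), p != [::] -> path arc x p -> last x p != x.

(* Utility of agent i for coalition C in the induced simple asymmetric FHG:
   v_i(j) = 1 iff arc i j, utility = (1/|C|) * sum_{j in C} v_i(j). *)
Definition util (arc : rel T) (i : T) (C : {set T}) : rat :=
  (#|[set j in C | arc i j]|%:R / #|C|%:R)%R.

(* partitions are sets of coalitions; pi(i) = pblock P i *)
Definition singleton_partition : {set {set T}} := [set [set x] | x : T].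

(* The partition obtained from P when agent i leaves its coalition and joins C
   (C an existing coalition, or C = set0 meaning a new singleton). *)
Definition move (P : {set {set T}}) (i : T) (C : {set T}) : {set {set T}} :=
  let B := pblock P i in
  ((P :\ B) :\ C) :|: (if B :\ i == set0 then set0 else [set B :\ i])
    :|: [set i |: C].

Definition IS_dev (arc : rel T) (P P' : {set {set T}}) : Prop :=
  exists (i : T) (C : {set T}),
    ((C \in P /\ C != pblock P i) \/ C = set0) /\
    P' = move P i C /\
    (util arc i (pblock P i) < util arc i (i |: C))%R /\
    (forall j, j \in C -> (util arc j C <= util arc j (i |: C))%R).

Definition IS_seq (arc : rel T) (s : seq {set {set T}}) : Prop :=
  forall k, k < size s ->
    IS_dev arc (nth singleton_partition (singleton_partition :: s) k)
               (nth singleton_partition s k).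

End FHG.

(* Main.v *)
Require Import Defs.
From mathcomp Require Import all_boot all_order all_algebra.
From mathcomp Require Import zify.
Set Implicit Arguments. Unset Strict Implicit. Unset Printing Implicit Defensive.
Import Order.TTheory GRing.Theory Num.Theory.

Lemma sum_subset (I : finType) (A B : {set I}) (F : I -> nat) :
  A \subset B -> \sum_(i in A) F i <= \sum_(i in B) F i.
Proof.
move=> sAB; rewrite [X in _ <= X](big_setID A) /= (setIidPr sAB).
exact: leq_addr.
Qed.

Lemma sum_setU (I : finType) (A B : {set I}) (F : I -> nat) :
  \sum_(i in A :|: B) F i <= \sum_(i in A) F i + \sum_(i in B) F i.
Proof.
rewrite (big_setID A) /= setUK leq_add2l; apply: sum_subset.
by apply/subsetP => x; rewrite !inE => /andP [/negPf -> ].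
Qed.

Lemma frac_le (o c o' d : nat) : 0 < c -> 0 < d ->
  ((o%:R / c%:R : rat) <= o'%:R / d%:R)%R = (o * d <= o' * c).
Proof.
move=> c0 d0.
rewrite ler_pdivrMr ?ltr0n // mulrAC ler_pdivlMr ?ltr0n // -!natrM ler_nat.
by rewrite mulnC [o' * c]mulnC.
Qed.

Lemma frac_lt (o c o' d : nat) : 0 < c -> 0 < d ->
  ((o%:R / c%:R : rat) < o'%:R / d%:R)%R = (o * d < o' * c).
Proof.
move=> c0 d0.
rewrite ltr_pdivrMr ?ltr0n // mulrAC ltr_pdivlMr ?ltr0n // -!natrM ltr_nat.
by rewrite mulnC [o' * c]mulnC.
Qed.

Lemma util_ge0 (T : finType) (arc : rel T) i (X : {set T}) : (0 <= util arc i X)%R.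
Proof. by rewrite /util divr_ge0 ?ler0n. Qed.

Lemma util_zero (T : finType) (arc : rel T) i (X : {set T}) :
  (forall j, j \in X -> ~~ arc i j) -> util arc i X = 0%R.
Proof.
move=> H; rewrite /util.
have -> : [set j in X | arc i j] = set0.
  by apply/setP => j; rewrite !inE; case: (boolP (j \in X)) => // /H /negPf ->.
by rewrite cards0 mul0r.
Qed.

Lemma util_pos (T : finType) (arc : rel T) i (X : {set T}) :
  (0 < util arc i X)%R -> exists2 j, j \in X & arc i j.
Proof.
move=> H.
have: [set j in X | arc i j] != set0.
  apply: contraTneq H => E; by rewrite /util E cards0 mul0r ltxx.
by case/set0Pn => j; rewrite inE => /andP [? ?]; exists j.
Qed.

Definition goodg (T : finType) (g : T -> {set T}) :=
  (forall v, v \in g v) /\ (forall u v, u \in g v -> g u = g v).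

Lemma pblock_img (T : finType) (g : T -> {set T}) :
  goodg g -> forall x, pblock [set g v | v : T] x = g x.
Proof.
move=> [G1 G2] x.
have xc : x \in cover [set g v | v : T].
  by apply/bigcupP; exists (g x); [apply: imset_f | apply: G1].
have := pblock_mem xc; case/imsetP => v _ Hv.
have := xc; rewrite -mem_pblock Hv => /G2 ->; done.
Qed.

Definition gmove (T : finType) (g : T -> {set T}) i (C : {set T}) v :=
  if (v == i) || (v \in C) then i |: C
  else if v \in g i then g i :\ i else g v.

Lemma move_img (T : finType) (g : T -> {set T}) i c :
  goodg g -> i \notin g c ->
  move [set g v | v : T] i (g c) = [set gmove g i (g c) v | v : T].
Proof.
move=> [G1 G2] ic.
have gd : goodg g by [].
rewrite /move pblock_img //.
apply/setP => X; apply/idP/idP.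
- rewrite !inE => /orP [/orP [|] | XC].
  + move=> /andP [XnC /andP [XnB /imsetP [u _ Xu]]]; subst X.
    apply/imsetP; exists u => //; rewrite /gmove.
    have ui : (u == i) = false.
      by apply/negbTE; apply: contra XnB => /eqP ->.
    have uc : (u \in g c) = false.
      by apply/negbTE; apply: contra XnC => /G2 ->.
    have ub : (u \in g i) = false.
      by apply/negbTE; apply: contra XnB => /G2 ->.
    by rewrite ui uc ub.
  + case: ifP => [_|/negbT Hne]; first by rewrite inE.
    rewrite inE => /eqP ->.
    case/set0Pn: Hne => v; rewrite !inE => /andP [vi vgi].
    apply/imsetP; exists v => //; rewrite /gmove (negbTE vi) vgi.
    have -> : (v \in g c) = false.
      apply/negbTE; apply/negP => vgc.
      move: ic; rewrite -(G2 _ _ vgc) (G2 _ _ vgi) => /negP; apply; exact: G1.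
    done.
  + by apply/imsetP; exists i => //; move: XC => /eqP ->; rewrite /gmove eqxx.
- case/imsetP => v _ ->; rewrite /gmove.
  case: ifP => H1; first by rewrite !inE eqxx orbT.
  case: ifP => H2.
    case: ifP => [/eqP E|_]; last by rewrite !inE eqxx orbT.
    have : v \in g i :\ i by rewrite !inE H2 andbT; apply/negP => /eqP vi; rewrite vi eqxx in H1.
    by rewrite E inE.
  rewrite !inE imset_f // andbT.
  apply/orP; left; apply/orP; left; apply/andP; split.
    apply/negP => /eqP E; have := G1 v; rewrite E => vc.
    by rewrite vc orbT in H1.
  by apply/negP => /eqP E; have := G1 v; rewrite E H2.
Qed.

Lemma goodg_move (T : finType) (g : T -> {set T}) i c :
  goodg g -> i \notin g c -> goodg (gmove g i (g c)).
Proof.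
move=> [G1 G2] ic; split.
- move=> v; rewrite /gmove; case: ifP => H1.
    by case/orP: H1 => [/eqP ->|H]; rewrite !inE ?eqxx ?H ?orbT.
  case: ifP => H2; last exact: G1.
  rewrite !inE H2 andbT; apply/negP => /eqP vi; by rewrite vi eqxx in H1.
- move=> u v; rewrite /gmove; case: ifP => H1.
    by rewrite !inE => ->.
  case: ifP => H2.
    rewrite !inE => /andP [ui ugi].
    rewrite (negbTE ui) ugi /=.
    have -> : (u \in g c) = false.
      apply/negbTE; apply/negP => ugc.
      move: ic; rewrite -(G2 _ _ ugc) (G2 _ _ ugi) => /negP; apply; exact: G1.
    done.
  move=> ugv; have E := G2 _ _ ugv.
  have -> : (u == i) = false.
    apply/negbTE; apply/negP => /eqP ui; subst u.
    by have := G1 v; rewrite -E H2.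
  have -> : (u \in g c) = false.
    apply/negbTE; apply/negP => /G2; rewrite E => E2.
    by have := G1 v; rewrite E2 => vc; rewrite vc orbT in H1.
  have -> : (u \in g i) = false.
    apply/negbTE; apply/negP => /G2; rewrite E => E2.
    by have := G1 v; rewrite E2 H2.
  done.
Qed.

Definition rk (T : finType) (arc : rel T) (v : T) :=
  #|[set u | (u != v) && connect arc u v]|.

Lemma no_cycle (T : finType) (arc : rel T) u v :
  acyclic arc -> connect arc v u -> arc u v -> False.
Proof.
move=> ac /connectP [p pp ->] a.
have := ac v (rcons p v); rewrite rcons_path pp a last_rcons eqxx /=.
by case: p {pp a} => [|x p] /(_ isT isT).
Qed.

Lemma irr (T : finType) (arc : rel T) u : asymmetric arc -> ~~ arc u u.
Proof. by move=> asy; apply/negP => a; have := asy _ _ a; rewrite a. Qed.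

Lemma rk_lt (T : finType) (arc : rel T) u v :
  asymmetric arc -> acyclic arc -> arc u v -> rk arc u < rk arc v.
Proof.
move=> asy ac a; apply: proper_card; apply/properP; split.
  apply/subsetP => w; rewrite !inE => /andP [wu cwu].
  apply/andP; split; last by apply: connect_trans cwu (connect1 a).
  by apply/negP => /eqP wv; subst w; apply: (no_cycle ac cwu a).
exists u; last by rewrite !inE eqxx.
rewrite !inE connect1 // andbT; apply/negP => /eqP uv; subst u.
by have := irr v asy; rewrite a.
Qed.

Lemma rk_bound (T : finType) (arc : rel T) v : (rk arc v).+1 <= #|T|.
Proof.
have : rk arc v <= #|[set~ v]|.
  apply: subset_leq_card; apply/subsetP => w; rewrite !inE => /andP [] //.
rewrite cardsC1; have : 0 < #|T| by apply/card_gt0P; exists v.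
lia.
Qed.

Definition Mx (T : finType) (arc : rel T) (X : {set T}) :=
  \max_(v in X) (rk arc v).+1.

Definition wt (T : finType) (arc : rel T) (X : {set T}) :=
  2 * #|T| * Mx arc X + #|X| * #|X|.

Definition Phi (T : finType) (arc : rel T) (P : {set {set T}}) :=
  \sum_(X in P) wt arc X.

Definition tourn (T : finType) (arc : rel T) (g : T -> {set T}) :=
  forall x u v, u \in g x -> v \in g x -> u != v -> arc u v || arc v u.

Lemma Mx_sub (T : finType) (arc : rel T) (X Y : {set T}) :
  X \subset Y -> Mx arc X <= Mx arc Y.
Proof.
move=> /subsetP sXY; apply/bigmax_leqP => v vX.
by apply: leq_bigmax_cond; apply: sXY.
Qed.

Lemma step (T : finType) (arc : rel T) (g : T -> {set T}) P' :
  asymmetric arc -> acyclic arc -> goodg g -> tourn arc g ->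
  IS_dev arc [set g v | v : T] P' ->
  exists g', [/\ goodg g', tourn arc g', P' = [set g' v | v : T] &
                 Phi arc P' < Phi arc [set g v | v : T]].
Proof.
move=> asy ac gd tg [i [C [HC [-> [Hi HCj]]]]].
have [G1 G2] := gd.
rewrite pblock_img // in HC Hi.
case: HC => [[CP CnB] | C0]; last first.
  exfalso; move: Hi; rewrite C0 setU0 (@util_zero _ arc i [set i]); first by rewrite ltNge util_ge0.
  by move=> j; rewrite inE => /eqP ->; apply: irr.
case/imsetP: CP => c _ Cc; subst C.
have ic : i \notin g c by apply: contra CnB => /G2 ->.
have upos : (0 < util arc i (i |: g c))%R by apply: le_lt_trans (util_ge0 _ _ _) Hi.
have [s] := util_pos upos; rewrite !inE => /orP [/eqP -> | sC] ais.
  by rewrite (negbTE (irr i asy)) in ais.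
have Hsink : forall j, j \in g c -> ~~ arc j i -> forall k, k \in g c -> ~~ arc j k.
  move=> j jC nji; have := HCj j jC; rewrite /util.
  have E : [set k in i |: g c | arc j k] = [set k in g c | arc j k].
    apply/setP => k; rewrite !inE; case: (eqVneq k i) => [->|_] //=.
    by rewrite (negbTE nji) !andbF.
  have c0 : 0 < #|g c| by apply/card_gt0P; exists j.
  rewrite E cardsU1 ic /= add1n frac_le // => H.
  have : #|[set k in g c | arc j k]| = 0 by nia.
  move/eqP; rewrite cards_eq0 => /eqP E0 k kC; apply/negP => ajk.
  have : k \in [set k in g c | arc j k] by rewrite inE kC ajk.
  by rewrite E0 inE.
have ssink : forall k, k \in g c -> ~~ arc s k := Hsink s sC (asy _ _ ais).
have Huniq : forall j, j \in g c -> ~~ arc j i -> j = s.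
  move=> j jC nji; apply/eqP; apply/negP => /negP js.
  have := tg c j s jC sC js.
  by rewrite (negbTE (Hsink j jC nji s sC)) (negbTE (ssink j jC)).
have Hkey : forall j, j \in g c -> arc j i || arc i j.
  move=> j jC; case: (boolP (arc j i)) => // nji.
  by rewrite (Huniq j jC nji) ais.
have Hx : #|[set j in i |: g c | arc i j]| <= 1.
  rewrite -(cards1 s); apply: subset_leq_card; apply/subsetP => j.
  rewrite !inE => /andP [/orP [/eqP -> | jC] aij].
    by rewrite (negbTE (irr i asy)) in aij.
  by apply/eqP; apply: Huniq jC (asy _ _ aij).
exists (gmove g i (g c)); split.
- exact: goodg_move.
- move=> x u v; rewrite /gmove; case: ifP => _.
    rewrite !inE => /orP [/eqP -> | uC] /orP [/eqP -> | vC] uv.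
    + by rewrite eqxx in uv.
    + by rewrite orbC; apply: Hkey.
    + by apply: Hkey.
    + exact: tg uC vC uv.
  case: ifP => _; last exact: tg.
  rewrite !inE => /andP [_ uB] /andP [_ vB] uv; exact: tg uB vB uv.
- exact: move_img.
rewrite /Phi /move pblock_img //.
set P := [set g v | v : T].
have BP : g i \in P by apply: imset_f.
have CP : g c \in P :\ g i by rewrite !inE CnB imset_f.
rewrite [X in _ < X](big_setD1 (g i) BP) [X in _ < _ + X](big_setD1 (g c) CP) /=.
apply: leq_ltn_trans (sum_setU _ _ _) _.
apply: leq_ltn_trans (leq_add (sum_setU _ _ _) (leqnn _)) _.
rewrite big_set1.
have Hbs : \sum_(X in (if g i :\ i == set0 then set0 else [set g i :\ i])) wt arc X
           <= wt arc (g i :\ i).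
  by case: ifP => _; rewrite ?big_set0 ?big_set1.
suff Hmain : wt arc (g i :\ i) + wt arc (i |: g c) < wt arc (g i) + wt arc (g c).
  set S1 := \sum_(_ in P :\ g i :\ g c) _; set W := wt arc (g i :\ i).
  apply: (@leq_ltn_trans (S1 + W + wt arc (i |: g c))); first by rewrite leq_add2r leq_add2l.
  lia.
have hb : #|g i| = (#|g i :\ i|).+1 by rewrite (cardsD1 i) G1.
have hc : #|i |: g c| = (#|g c|).+1 by rewrite cardsU1 ic.
have hn : #|i |: g c| <= #|T| by apply: max_card.
have hMC : Mx arc (i |: g c) <= Mx arc (g c).
  apply/bigmax_leqP => v; rewrite !inE => /orP [/eqP -> | vC].
    have := rk_lt asy ac ais.
    have := @leq_bigmax_cond T (fun v => v \in g c) (fun v => (rk arc v).+1) s sC.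
    rewrite /Mx; lia.
  exact: (@leq_bigmax_cond T (fun v => v \in g c) (fun v => (rk arc v).+1) v vC).
have hMC' := leq_mul (leqnn (2 * #|T|)) hMC.
rewrite /wt hb hc; rewrite hc in hn.
case: (boolP [exists t in g i, arc i t]).
  case/exists_inP => t tB ait.
  have hp : 0 < #|[set j in g i | arc i j]|.
    by apply/card_gt0P; exists t; rewrite inE tB ait.
  move: Hi; rewrite /util frac_lt ?hb ?hc // => Hlt.
  have hlt : (#|g c|).+1 < (#|g i :\ i|).+1.
    have h1 := leq_mul (leqnn (#|g i :\ i|).+1) Hx.
    have h2 := leq_mul hp (leqnn (#|g c|).+1).
    lia.
  have hMB : Mx arc (g i :\ i) <= Mx arc (g i) by apply: Mx_sub; apply: subD1set.
  have hMB' := leq_mul (leqnn (2 * #|T|)) hMB.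
  nia.
move/exists_inPn => Hno.
have hMB : (Mx arc (g i :\ i)).+1 <= Mx arc (g i).
  have h1 : Mx arc (g i :\ i) <= rk arc i.
    apply/bigmax_leqP => v; rewrite !inE => /andP [vi vB].
    have := tg i v i vB (G1 i) vi; rewrite (negbTE (Hno v vB)) orbF => avi.
    exact: rk_lt asy ac avi.
  have := @leq_bigmax_cond T (fun v => v \in g i) (fun v => (rk arc v).+1) i (G1 i).
  rewrite /Mx in h1 *; lia.
have hMB' := leq_mul (leqnn (2 * #|T|)) hMB.
nia.
Qed.

Lemma goodg_single (T : finType) : goodg (fun v : T => [set v]).
Proof. by split => [v|u v]; rewrite ?inE // => /eqP ->. Qed.

Lemma tourn_single (T : finType) (arc : rel T) : tourn arc (fun v : T => [set v]).
Proof. by move=> x u v; rewrite !inE => /eqP -> /eqP ->; rewrite eqxx. Qed.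

Lemma seq_bound (T : finType) (arc : rel T) :
  asymmetric arc -> acyclic arc -> forall s, IS_seq arc s ->
  size s <= Phi arc (singleton_partition T).
Proof.
move=> asy ac s Hs.
set P0 := singleton_partition T.
have H : forall k, k <= size s -> exists g, [/\ goodg g, tourn arc g,
    nth P0 (P0 :: s) k = [set g v | v : T] & Phi arc (nth P0 (P0 :: s) k) + k <= Phi arc P0].
  elim => [_ | k IH lt].
    exists (fun v => [set v]); split => //; [exact: goodg_single | exact: tourn_single| by rewrite addn0].
  have [g [gd tg E HP]] := IH (ltnW lt).
  have := Hs k lt; rewrite E => Hd.
  have [g' [gd' tg' E' HP']] := step asy ac gd tg Hd.
  exists g'; split => //.
  rewrite /= in E' *; rewrite E in HP; rewrite E' in HP'; rewrite E'; lia.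
have [g [_ _ _ HP]] := H (size s) (leqnn _); lia.
Qed.

Lemma inf_false (T : finType) (arc : rel T) :
  asymmetric arc -> acyclic arc -> forall f : nat -> {set {set T}},
  f 0 = singleton_partition T -> (forall k, IS_dev arc (f k) (f k.+1)) -> False.
Proof.
move=> asy ac f f0 Hf.
have H : forall k, exists g, [/\ goodg g, tourn arc g,
    f k = [set g v | v : T] & Phi arc (f k) + k <= Phi arc (f 0)].
  elim => [| k [g [gd tg E HP]]].
    exists (fun v => [set v]); split => //; [exact: goodg_single | exact: tourn_single| by rewrite addn0].
  have := Hf k; rewrite E => Hd.
  have [g' [gd' tg' E' HP']] := step asy ac gd tg Hd.
  exists g'; split => //.
  rewrite E in HP; rewrite E' in HP'; rewrite E'; lia.
have [g [_ _ _ HP]] := H (Phi arc (f 0)).+1; lia.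
Qed.

Lemma Phi0_bound (T : finType) (arc : rel T) :
  Phi arc (singleton_partition T) <= 3 * #|T| ^ 4.
Proof.
rewrite /Phi /singleton_partition.
apply: (@leq_trans (\sum_(X in [set [set x] | x : T]) (2 * #|T| * #|T| + 1))).
  apply: leq_sum => X /imsetP [v _ ->].
  rewrite /wt /Mx big_set1 cards1.
  have := leq_mul (leqnn (2 * #|T|)) (rk_bound arc v); lia.
rewrite sum_nat_const.
have := leq_imset_card (fun x : T => [set x]) T.
set m := #|_|; set n := #|T| => hm.
apply: (@leq_trans (n * (2 * n * n + 1))); first by apply: leq_mul.
case: n {hm m} => [|n] //.
have h1 : n.+1 ^ 3 <= n.+1 ^ 4 by apply: leq_pexp2l.
have h2 : n.+1 ^ 1 <= n.+1 ^ 4 by apply: leq_pexp2l.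
rewrite !expnS expn0 in h1 h2 *. lia.
Qed.

Definition pairg (T : finType) (a b : T) (v : T) : {set T} :=
  if v \in [set a; b] then [set a; b] else [set v].

Lemma goodg_pair (T : finType) (a b : T) : goodg (pairg a b).
Proof.
split => [v|u v]; rewrite /pairg.
  by case: ifP => // _; rewrite inE.
case: ifP => vab.
  by move=> uab; rewrite uab.
by rewrite inE => /eqP ->; rewrite vab.
Qed.

Lemma dev_gen (T : finType) (arc : rel T) (g g2 : T -> {set T}) i c :
  asymmetric arc -> goodg g -> g c = [set c] -> c != i ->
  (forall j, j \in g i -> ~~ arc i j) -> arc i c ->
  gmove g i [set c] =1 g2 ->
  IS_dev arc [set g v | v : T] [set g2 v | v : T].
Proof.
move=> asy gd gc ci Hno aic Eg.
have ic : i \notin g c by rewrite gc inE eq_sym.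
exists i, [set c]; split; [|split; [|split]].
- left; split; first by rewrite -gc imset_f.
  rewrite pblock_img //; apply/negP => /eqP E.
  by have := gd.1 i; rewrite -E inE eq_sym (negbTE ci).
- rewrite -gc move_img // gc; apply: eq_imset => v; by rewrite Eg.
- rewrite pblock_img // util_zero // /util; apply: divr_gt0; rewrite ltr0n.
    by apply/card_gt0P; exists c; rewrite !inE eqxx aic orbT.
  by apply/card_gt0P; exists i; rewrite !inE eqxx.
- move=> j; rewrite inE => /eqP ->.
  rewrite (@util_zero _ arc c [set c]) ?util_ge0 //.
  by move=> k; rewrite inE => /eqP ->; apply: irr.
Qed.

Definition gk (T : finType) (w : nat -> T) (k : nat) : T -> {set T} :=
  if k is k'.+1 then pairg (w k') (w k'.+1) else (fun v => [set v]).

Lemma walk_dev (T : finType) (arc : rel T) (w : nat -> T) :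
  asymmetric arc -> (forall k, arc (w k) (w k.+1)) ->
  forall k, IS_dev arc [set gk w k v | v : T] [set gk w k.+1 v | v : T].
Proof.
move=> asy hw [|k] /=.
- have a01 := hw 0.
  apply: (dev_gen (i := w 0) (c := w 1) asy (goodg_single T)).
  all: try done.
  + by apply/negP => /eqP E; rewrite E (negbTE (irr _ asy)) in a01.
  + by move=> j; rewrite inE => /eqP ->; apply: irr.
  + move=> v; rewrite /gmove /pairg !inE.
    by case: (v == w 0).
- have a1 := hw k; have a2 := hw k.+1.
  set a' := w k in a1 *; set a := w k.+1 in a1 a2 *; set b := w k.+2 in a2 *.
  have aa' : a' != a by apply/negP => /eqP E; rewrite E (negbTE (irr _ asy)) in a1.
  have ab : a != b by apply/negP => /eqP E; rewrite -E (negbTE (irr _ asy)) in a2.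
  have a'b : a' != b.
    by apply/negP => /eqP E; rewrite -E in a2; have := asy _ _ a1; rewrite a2.
  apply: (dev_gen (i := a) (c := b) asy (goodg_pair a' a)).
  + by rewrite /pairg !inE eq_sym (negbTE a'b) eq_sym (negbTE ab).
  + by rewrite eq_sym.
  + rewrite /pairg !inE eqxx orbT => j; rewrite !inE => /orP [/eqP -> | /eqP ->].
      by apply/negP => h; have := asy _ _ a1; rewrite h.
    exact: irr.
  + exact: a2.
  + move=> v; rewrite /gmove /pairg !inE.
    case: (eqVneq v a) => [->|va]; first by rewrite eqxx.
    case: (eqVneq v b) => [->|vb]; first by rewrite eqxx !orbT.
    rewrite eqxx !orbT /= !inE orbF (negbTE va) orbF.
    case: (eqVneq v a') => [->|va'] /=; last done.
    apply/setP => z; rewrite !inE.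
    case: (eqVneq z a) => [->|za]; first by rewrite /= eq_sym (negbTE aa').
    by rewrite /= orbF.
Qed.

Lemma cyc_inf (T : finType) (arc : rel T) :
  asymmetric arc -> forall x p, p != [::] -> path arc x p -> last x p = x ->
  exists f : nat -> {set {set T}},
    f 0 = singleton_partition T /\ forall k, IS_dev arc (f k) (f k.+1).
Proof.
move=> asy x [|y p'] // _ /= /andP [axy pp] lst.
have cy : cycle arc (y :: p') by rewrite /= rcons_path pp lst axy.
pose w k := iter k (next (y :: p')) y.
have win : forall k, w k \in y :: p'.
  elim => [|k IH]; first exact: mem_head.
  by rewrite /w iterS mem_next.
have hw : forall k, arc (w k) (w k.+1).
  by move=> k; rewrite /w iterS; exact: (next_cycle cy (win k)).
exists (fun k => [set gk w k v | v : T]); split => //.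
exact: walk_dev.
Qed.

Theorem proposition5p5 :
  (forall (T : finType) (arc : rel T), asymmetric arc ->
     ((~ exists f : nat -> {set {set T}},
           f 0 = singleton_partition T /\
           forall k, IS_dev arc (f k) (f k.+1))
      <-> acyclic arc))
  /\
  (exists c : nat, forall (n : nat) (arc : rel 'I_n),
     asymmetric arc -> acyclic arc ->
     forall s : seq {set {set 'I_n}}, IS_seq arc s -> size s <= c * n ^ 4).
Proof.
split.
  move=> T arc asy; split.
    move=> Hno x p pn pp; apply/negP => /eqP lst.
    by apply: Hno; apply: (cyc_inf asy pn pp lst).
  by move=> ac [f [f0 Hf]]; apply: (inf_false asy ac f0 Hf).
exists 3 => n arc asy ac s Hs.
apply: leq_trans (seq_bound asy ac Hs) _.
by have := Phi0_bound arc; rewrite card_ord.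
Qed.
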